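(* Let $D_{-}$ denote the difference operator $D_{-}F(z)=F(z)-F(z-1)$, applied coefficientwise to formal power series in the non-commuting variables $Y_1,Y_2,\ldots$ whose coefficients are meromorphic functions of $z$. Then the generating series $H(z)$ of Hurwitz polyzeta functions satisfies \[ D_{-}H(z)=-\sum_{k=1}^{\infty}\frac{Y_{k}}{(z-1)^{k}}\,H(z), \] i.e. $H(z)=H(z-1)-\sum_{k\ge 1}(z-1)^{-k}Y_kH(z)$ as an identity of formal power series (coefficient by coefficient).
   Context: For integers $k_1,\ldots,k_r\ge 1$ with $k_r\ge 2$, the Hurwitz polyzeta function is the meromorphic function of $z$ \[ \zeta(k_1,\ldots,k_r|z)=\sum_{0\le n_1<n_2<\cdots<n_r}\frac{1}{(z+n_1)^{k_1}\cdots(z+n_r)^{k_r}}. \] Let $\{y_j\}_{j\ge1}$ be non-commuting variables. The stuffle product on ${\mathbb Q}\langle y_1,y_2,\ldots\rangle$ is the bilinear product defined inductively by $1*w=w*1=w$ for the empty word $1$ and $y_kw*y_{k'}w'=y_k(w*y_{k'}w')+y_{k'}(y_kw*w')+y_{k+k'}(w*w')$. To a word $y_{k_1}\cdots y_{k_r}$ with $k_r\ge2$ associate $\zeta(y_{k_1}\cdots y_{k_r}|z):=\zeta(k_1,\ldots,k_r|z)$; set $\zeta(1|z)=\zeta(y_1|z):=-\Gamma'(z)/\Gamma(z)$, $\zeta(\text{empty word}|z)=1$, and extend $w\mapsto\zeta(w|z)$ to all words (in particular to words ending in $y_1$) as the homomorphism from the stuffle algebra to meromorphic functions of $z$ determined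 by these values. Let $\{Y_j\}_{j\ge1}$ be non-commuting formal variables, with $Y_{k_1}\cdots Y_{k_r}$ the word corresponding to $y_{k_1}\cdots y_{k_r}$, and define \[ H(z)=\sum_{w}\zeta(w|z)\,W, \] the sum over all words $w$ in the $y_j$ (including the empty word, with coefficient $1$), $W$ being the corresponding word in the $Y_j$. *)

(* Defs.v *)
From Stdlib Require Import Reals List.
From Coquelicot Require Import Coquelicot.
Import ListNotations.
Open Scope C_scope.

(* A word y_{k_1} ... y_{k_r} is the list [k_1; ...; k_r]; letters must be >= 1. *)
Definition word := list nat.
Definition valid_word (w : word) : Prop := List.Forall (fun k => (1 <= k)%nat) w.
Definition convergent_word (w : word) : Prop :=
  valid_word w /\ exists u k, w = u ++ [k] /\ (2 <= k)%nat.

Fixpoint csum (f : nat -> C) (N : nat) : C :=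
  match N with O => 0 | S n => csum f n + f n end.

(* Stuffle product, as the (multi)list of words, each with multiplicity one. *)
Fixpoint stuffle (u : word) : word -> list word :=
  match u with
  | [] => fun v => [v]
  | a :: u' =>
      fix st2 (v : word) : list word :=
        match v with
        | [] => [a :: u']
        | b :: v' =>
            map (cons a) (stuffle u' v) ++ map (cons b) (st2 v')
              ++ map (cons (a + b)%nat) (stuffle u' v')
        end
  end.

(* Truncated Hurwitz polyzeta sum, on the reversed word:
   part_rev [k_r; ...; k_1] z N = sum_{0 <= n_1 < ... < n_r < N} prod_j (z+n_j)^(-k_j). *)
Fixpoint part_rev (rw : word) (z : C) (N : nat) : C :=
  match rw with
  | [] => 1
  | k :: rw' => csum (fun n => part_rev rw' z n * / (z + RtoC (INR n)) ^ k) N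
  end.

Definition hurwitz_partial (w : word) (z : C) (N : nat) : C := part_rev (rev w) z N.

Definition not_pole (z : C) : Prop := forall n : nat, z <> RtoC (- INR n).

Definition euler_gamma : R :=
  real (Lim_seq (fun N => sum_f_R0 (fun k => / INR (S k))%R N - ln (INR (S N)))%R).

Definition is_digamma (z p : C) : Prop :=
  filterlim
    (fun N => RtoC (- euler_gamma)
              + csum (fun n => / RtoC (INR (S n)) - / (z + RtoC (INR n))) N)
    eventually (locally p).

Definition hurwitz_polyzeta (Z : word -> C -> C) : Prop :=
  (forall z, not_pole z -> Z [] z = 1) /\
  (forall z, not_pole z -> is_digamma z (- Z [1%nat] z)) /\
  (forall w z, convergent_word w -> not_pole z ->
     filterlim (hurwitz_partial w z) eventually (locally (Z w z))) /\
  (forall u v z, valid_word u -> valid_word v -> not_pole z ->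
     Z u z * Z v z = fold_right Cplus 0 (map (fun w => Z w z) (stuffle u v))).

(* Formal non-commutative series in Y_1, Y_2, ...: coefficient function on words. *)
Definition ncseries := word -> C.

Definition ser_mul (A B : ncseries) : ncseries :=
  fun w => csum (fun i => A (firstn i w) * B (skipn i w)) (S (length w)).

Definition Hser (Z : word -> C -> C) (z : C) : ncseries := fun w => Z w z.

Definition Yser (z : C) : ncseries :=
  fun w => match w with [k] => if Nat.leb 1 k then / (z - 1) ^ k else 0 | _ => 0 end.

Definition D_minus (F : C -> ncseries) (z : C) : ncseries :=
  fun w => F z w - F (z - 1) w.

(* Main.v *)
Require Import Defs.
From Stdlib Require Import Reals List Lia Lra FunctionalExtensionality.
From Coquelicot Require Import Coquelicot.
Import ListNotations.
Open Scope C_scope.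

Definition ssum (g : word -> C) (l : list word) : C := fold_right Cplus 0 (map g l).

Lemma ssum_app g l1 l2 : ssum g (l1 ++ l2) = ssum g l1 + ssum g l2.
Proof.
  unfold ssum; induction l1; simpl. ring. rewrite IHl1. ring.
Qed.

Lemma ssum_map g f l : ssum g (map f l) = ssum (fun x => g (f x)) l.
Proof. unfold ssum; rewrite map_map; reflexivity. Qed.

Lemma ssum_ext f g l : (forall x, f x = g x) -> ssum f l = ssum g l.
Proof. intros H; unfold ssum; induction l; simpl; auto. rewrite H, IHl; auto. Qed.

Lemma stuffle_1_nil : stuffle [1%nat] [] = [[1%nat]].
Proof. reflexivity. Qed.

Lemma stuffle_1_cons b v : stuffle [1%nat] (b :: v) =
  (1%nat :: b :: v) :: map (cons b) (stuffle [1%nat] v) ++ [(1 + b)%nat :: v].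
Proof. reflexivity. Qed.

Lemma ssum_st1_cons g b v : ssum g (stuffle [1%nat] (b :: v)) =
  g (1%nat :: b :: v) + ssum (fun x => g (b :: x)) (stuffle [1%nat] v) + g ((1+b)%nat :: v).
Proof.
  rewrite stuffle_1_cons. change (ssum g ((1%nat :: b :: v) :: (map (cons b) (stuffle [1%nat] v) ++ [(1 + b)%nat :: v])))
   with (g (1%nat :: b :: v) + ssum g (map (cons b) (stuffle [1%nat] v) ++ [(1 + b)%nat :: v])).
  rewrite ssum_app, ssum_map. unfold ssum at 2. simpl. ring.
Qed.

Lemma valid_app u v : valid_word u -> valid_word v -> valid_word (u ++ v).
Proof. intros; apply Forall_app; auto. Qed.

Lemma valid_rep t : valid_word (repeat 1%nat t).
Proof. induction t; constructor; auto. Qed.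

Lemma valid_cons k u : (1 <= k)%nat -> valid_word u -> valid_word (k :: u).
Proof. intros; constructor; auto. Qed.

Lemma valid_app_inv u v : valid_word (u ++ v) -> valid_word u /\ valid_word v.
Proof. intros H; apply Forall_app in H; auto. Qed.

Lemma repeat_S_r t : repeat 1%nat (S t) = repeat 1%nat t ++ [1%nat].
Proof. induction t; simpl; auto. simpl in IHt. rewrite IHt. reflexivity. Qed.

Lemma INR_S_nz t : RtoC (INR (S t)) <> 0.
Proof.
  intro H. assert (H' : Re (RtoC (INR (S t))) = Re 0) by (rewrite H; reflexivity).
  rewrite re_RtoC in H'. revert H'. apply not_0_INR. discriminate.
Qed.

Section Uniq.
Variable D : word -> C.

Lemma K1 m : forall t p, valid_word p -> (length p + t = m)%nat ->
  (forall x, valid_word x -> length x = m -> D x = 0) ->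
  ssum (fun x => D (p ++ x)) (stuffle [1%nat] (repeat 1%nat t)) =
  RtoC (INR (S t)) * D (p ++ repeat 1%nat (S t)).
Proof.
  induction t; intros p Vp Hl Hs.
  - simpl. unfold ssum; simpl. replace (RtoC 1) with (RtoC 1) by reflexivity. ring.
  - change (repeat 1%nat (S t)) with (1%nat :: repeat 1%nat t).
    rewrite ssum_st1_cons.
    rewrite (Hs (p ++ (1+1)%nat :: repeat 1%nat t)).
    2:{ apply valid_app; auto. apply valid_cons; [lia|apply valid_rep]. }
    2:{ rewrite length_app; simpl; rewrite repeat_length; lia. }
    assert (E1 : (p ++ [1%nat]) ++ repeat 1%nat (S t) = p ++ repeat 1%nat (S (S t))).
    { rewrite <- app_assoc. reflexivity. }
    assert (E2 : (fun x => D (p ++ 1%nat :: x)) = (fun x => D ((p ++ [1%nat]) ++ x))).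
    { apply functional_extensionality; intros; rewrite <- app_assoc; reflexivity. }
    rewrite (ssum_ext _ (fun x : word => D ((p ++ [1%nat]) ++ x)));
      [| intros; rewrite <- app_assoc; reflexivity].
    rewrite (IHt (p ++ [1%nat])).
    2:{ apply valid_app; auto. apply valid_cons; [lia|constructor]. }
    2:{ rewrite length_app; simpl; lia. }
    2:{ auto. }
    rewrite E1.
    change (1%nat :: 1%nat :: repeat 1%nat t) with (repeat 1%nat (S (S t))).
    rewrite (S_INR (S t)). rewrite RtoC_plus. ring.
Qed.

Lemma K2 m t : forall v0 p, valid_word p -> valid_word v0 ->
  (v0 = [] \/ exists u k, v0 = u ++ [k] /\ (2 <= k)%nat) ->
  (length p + length v0 + t = m)%nat ->
  (forall x, valid_word x -> length x = m -> D x = 0) ->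
  (forall x, convergent_word x -> (length x + t = S m)%nat -> D (x ++ repeat 1%nat t) = 0) ->
  ssum (fun x => D (p ++ x)) (stuffle [1%nat] (v0 ++ repeat 1%nat t)) =
  RtoC (INR (S t)) * D (p ++ v0 ++ repeat 1%nat (S t)).
Proof.
  induction v0 as [|b v0 IH]; intros p Vp Vv Hv Hl Hs Hc.
  - simpl. apply (K1 m); auto. simpl in Hl; lia.
  - rewrite <- app_comm_cons, ssum_st1_cons.
    pose proof (Forall_inv Vv) as Hb; pose proof (Forall_inv_tail Vv) as Vv0; simpl in Hb.
    rewrite (Hs (p ++ (1+b)%nat :: v0 ++ repeat 1%nat t)).
    2:{ apply valid_app; auto. apply valid_cons; [lia|apply valid_app; auto; apply valid_rep]. }
    2:{ rewrite length_app; simpl; rewrite length_app, repeat_length; simpl in Hl; lia. }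
    destruct Hv as [Hv|[u [k [Hu Hk]]]]; [discriminate|].
    assert (Ec : D (p ++ 1%nat :: b :: v0 ++ repeat 1%nat t) = 0).
    { replace (p ++ 1%nat :: b :: v0 ++ repeat 1%nat t) with ((p ++ 1%nat :: b :: v0) ++ repeat 1%nat t)
        by (rewrite <- app_assoc; reflexivity).
      apply Hc.
      - split. apply valid_app; auto. apply valid_cons; auto.
        exists (p ++ 1%nat :: u), k. rewrite Hu. split; auto. rewrite <- app_assoc. reflexivity.
      - rewrite length_app; simpl; simpl in Hl; lia. }
    rewrite Ec.
    rewrite (ssum_ext _ (fun x : word => D ((p ++ [b]) ++ x)));
      [| intros; rewrite <- app_assoc; reflexivity].
    rewrite (IH (p ++ [b])); auto.
    + rewrite <- !app_assoc. simpl. ring.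
    + apply valid_app; auto. constructor; auto.
    + destruct u as [|c u]. simpl in Hu. injection Hu; intros; subst; auto.
      right. exists u, k. simpl in Hu. injection Hu; intros; subst; auto.
    + rewrite length_app; simpl; simpl in Hl; lia.
Qed.

Lemma Cmult_cancel (c x : C) : c <> 0 -> c * x = 0 -> x = 0.
Proof. intros Hc H. replace x with (/c * (c * x)) by (field; auto). rewrite H. ring. Qed.

Lemma decomp w : valid_word w ->
  w = repeat 1%nat (length w) \/ exists v0 t, convergent_word v0 /\ w = v0 ++ repeat 1%nat t.
Proof.
  induction w as [|k w IH] using rev_ind; intros V.
  - left; reflexivity.
  - apply valid_app_inv in V as [Vw Vk].
    pose proof (Forall_inv Vk) as Hk; simpl in Hk.
    destruct (Nat.eq_dec k 1) as [->|Hk2].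
    + destruct (IH Vw) as [E|[v0 [t [Cv E]]]].
      * left. rewrite length_app, Nat.add_comm. simpl. rewrite E at 1. rewrite <- repeat_S_r. reflexivity.
      * right. exists v0, (S t). split; auto. rewrite E, repeat_S_r, app_assoc. reflexivity.
    + right. exists (w ++ [k]), 0%nat. split.
      * split. apply valid_app; auto. exists w, k; split; auto; lia.
      * simpl; rewrite app_nil_r; reflexivity.
Qed.

Lemma uniq_main :
  D [] = 0 ->
  (forall x, convergent_word x -> D x = 0) ->
  (forall v, valid_word v -> D v = 0 -> ssum D (stuffle [1%nat] v) = 0) ->
  forall w, valid_word w -> D w = 0.
Proof.
  intros H0 Hc HE.
  assert (M : forall n w, valid_word w -> (length w <= n)%nat -> D w = 0).
  { induction n as [|m IHn]; intros w Vw Hlw.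
    - destruct w; [auto | simpl in Hlw; lia].
    - destruct (Nat.le_gt_cases (length w) m) as [Hle|Hgt]; [apply IHn; auto|].
      assert (Hlen : length w = S m) by lia.
      assert (Q : forall t x, convergent_word x -> (length x + t = S m)%nat ->
                 D (x ++ repeat 1%nat t) = 0).
      { induction t as [|t IHt]; intros x Cx Hx.
        - rewrite app_nil_r; auto.
        - assert (Vx : valid_word x) by (destruct Cx; auto).
          assert (Dv : D (x ++ repeat 1%nat t) = 0).
          { apply IHn. apply valid_app; auto; apply valid_rep.
            rewrite length_app, repeat_length; lia. }
          assert (Hv := HE (x ++ repeat 1%nat t) (valid_app _ _ Vx (valid_rep t)) Dv).
          change (ssum (fun y => D ([] ++ y)) (stuffle [1%nat] (x ++ repeat 1%nat t)) = 0) in Hv.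
          rewrite (K2 m t x []) in Hv.
          + apply Cmult_cancel in Hv; [exact Hv | apply INR_S_nz].
          + constructor.
          + auto.
          + destruct Cx as [_ [u [k [E Hk]]]]; right; exists u, k; auto.
          + simpl; lia.
          + intros; apply IHn; auto; lia.
          + intros y Cy Hy. apply IHt; auto. }
      destruct (decomp w Vw) as [E|[v0 [t [Cv E]]]].
      + rewrite Hlen in E. subst w.
        assert (Dv : D (repeat 1%nat m) = 0).
        { apply IHn; [apply valid_rep | rewrite repeat_length; lia]. }
        assert (Hv := HE (repeat 1%nat m) (valid_rep m) Dv).
        change (ssum (fun y => D ([] ++ y)) (stuffle [1%nat] (repeat 1%nat m)) = 0) in Hv.
        rewrite (K1 m m []) in Hv.
        * apply Cmult_cancel in Hv; [exact Hv | apply INR_S_nz].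
        * constructor.
        * reflexivity.
        * intros; apply IHn; auto; lia.
      + subst w. apply Q; auto. rewrite length_app, repeat_length in Hlen; lia. }
  intros w Vw; apply (M (length w)); auto.
Qed.
End Uniq.

Lemma ssum_plus f g l : ssum (fun x => f x + g x) l = ssum f l + ssum g l.
Proof. unfold ssum; induction l; simpl. ring. rewrite IHl. ring. Qed.
Lemma ssum_scal a f l : ssum (fun x => a * f x) l = a * ssum f l.
Proof. unfold ssum; induction l; simpl. ring. rewrite IHl. ring. Qed.
Lemma ssum_minus f g l : ssum (fun x => f x - g x) l = ssum f l - ssum g l.
Proof. unfold ssum; induction l; simpl. ring. rewrite IHl. ring. Qed.

Lemma not_pole_pred z : not_pole (z - 1) -> not_pole z.
Proof.
  intros H n E. apply (H (S n)). rewrite E, S_INR. apply injective_projections; simpl; ring.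
Qed.

Lemma zm1_nz z : not_pole (z - 1) -> z - 1 <> 0.
Proof. intros H E. apply (H 0%nat). rewrite E. simpl. rewrite Ropp_0. reflexivity. Qed.

Section Alg.
Variable Z : word -> C -> C.
Variable z : C.
Hypothesis HZ : hurwitz_polyzeta Z.
Hypothesis Hp : not_pole (z - 1).

Definition F2 (w : word) : C :=
  Z w z + match w with [] => 0 | k :: w' => / (z - 1) ^ k * Z w' z end.

Lemma Zhom u v y : valid_word u -> valid_word v -> not_pole y ->
  Z u y * Z v y = ssum (fun w => Z w y) (stuffle u v).
Proof. intros; destruct HZ as [_ [_ [_ HH]]]; apply HH; auto. Qed.

Lemma ssum_F2_cons a L : ssum F2 (map (cons a) L) =
  ssum (fun x => Z (a :: x) z) L + / (z - 1) ^ a * ssum (fun x => Z x z) L.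
Proof. rewrite ssum_map. unfold F2. rewrite ssum_plus, ssum_scal. reflexivity. Qed.

Lemma F2_hom u v : valid_word u -> valid_word v ->
  F2 u * F2 v = ssum F2 (stuffle u v).
Proof.
  assert (Npz := not_pole_pred z Hp).
  assert (Z0 : Z [] z = 1) by (destruct HZ as [HH _]; auto).
  assert (Nz := zm1_nz z Hp).
  intros Vu Vv. destruct u as [|a u'].
  - unfold ssum; simpl. unfold F2 at 1. rewrite Z0. ring.
  - destruct v as [|b v'].
    + unfold ssum; simpl. unfold F2 at 2. rewrite Z0. ring.
    + change (stuffle (a :: u') (b :: v')) with
        (map (cons a) (stuffle u' (b :: v')) ++ map (cons b) (stuffle (a :: u') v')
           ++ map (cons (a + b)%nat) (stuffle u' v')).
      rewrite !ssum_app, !ssum_F2_cons.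
      pose proof (Forall_inv_tail Vu) as Vu'. pose proof (Forall_inv_tail Vv) as Vv'.
      rewrite <- (Zhom u' (b :: v')), <- (Zhom (a :: u') v'), <- (Zhom u' v'); auto.
      assert (E := Zhom (a :: u') (b :: v') z Vu Vv Npz).
      change (stuffle (a :: u') (b :: v')) with
        (map (cons a) (stuffle u' (b :: v')) ++ map (cons b) (stuffle (a :: u') v')
           ++ map (cons (a + b)%nat) (stuffle u' v')) in E.
      rewrite !ssum_app, !ssum_map in E.
      assert (E2 : ssum (fun x => Z (a :: x) z) (stuffle u' (b :: v')) +
        (ssum (fun x => Z (b :: x) z) (stuffle (a :: u') v') +
         ssum (fun x => Z ((a + b)%nat :: x) z) (stuffle u' v')) = Z (a :: u') z * Z (b :: v') z)
        by (rewrite E; reflexivity).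
      unfold F2. rewrite Cpow_add_r.
      transitivity (Z (a :: u') z * Z (b :: v') z + / (z - 1) ^ a * (Z u' z * Z (b :: v') z) +
         / (z - 1) ^ b * (Z (a :: u') z * Z v' z) + / (z - 1) ^ a * / (z - 1) ^ b * (Z u' z * Z v' z)).
      * ring.
      * rewrite <- E2. field. split; apply Cpow_nz; auto.
Qed.
End Alg.

Lemma lim_plus (f g : nat -> C) a b :
  filterlim f eventually (locally a) -> filterlim g eventually (locally b) ->
  filterlim (fun n => f n + g n) eventually (locally (a + b)).
Proof.
  intros Hf Hg. apply (filterlim_comp_2 f g (fun x y : C => plus x y) Hf Hg).
  apply (filterlim_plus (V := C_NormedModule)).
Qed.

Lemma lim_scal (f : nat -> C) c a :
  filterlim f eventually (locally a) ->
  filterlim (fun n => c * f n) eventually (locally (c * a)).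
Proof.
  intros Hf. apply (filterlim_comp _ _ _ f (fun x : C => scal c x) _ _ _ Hf).
  apply (filterlim_scal_r (V := C_NormedModule)).
Qed.

Lemma lim_shift (f : nat -> C) a :
  filterlim f eventually (locally a) ->
  filterlim (fun n => f (S n)) eventually (locally a).
Proof.
  intros Hf. apply (filterlim_comp _ _ _ S f eventually eventually); auto.
  apply eventually_subseq. intros; lia.
Qed.

Lemma lim_unique (f : nat -> C) a b :
  filterlim f eventually (locally a) -> filterlim f eventually (locally b) -> a = b.
Proof. intros H1 H2; exact (@filterlim_locally_unique nat C_AbsRing C_NormedModule eventually (Proper_StrongProper _ eventually_filter) f a b H1 H2). Qed.

Lemma lim_ext (f g : nat -> C) a :
  (forall n, f n = g n) -> filterlim f eventually (locally a) -> filterlim g eventually (locally a).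
Proof. intros E H. apply (filterlim_ext f); auto. Qed.

Lemma lim_inv (w : C) :
  filterlim (fun n : nat => / (w + RtoC (INR n))) eventually (locally (RtoC 0)).
Proof.
  apply filterlim_locally. intros eps.
  destruct (INR_archimed 1 (Cmod w + / eps) Rlt_0_1) as [N0 HN0].
  rewrite Rmult_1_r in HN0.
  exists N0. intros n Hn. apply (norm_compat1 (V := C_NormedModule)).
  assert (Hle : (INR N0 <= INR n)%R) by (apply le_INR; lia).
  assert (Hpe : (0 < / eps)%R) by (apply Rinv_0_lt_compat, cond_pos).
  assert (Hw := Cmod_ge_0 w).
  assert (Htri : (INR n <= Cmod (w + RtoC (INR n)) + Cmod w)%R).
  { assert (Ec : Cmod (RtoC (INR n)) = INR n).
    { rewrite Cmod_R, Rabs_pos_eq; auto. apply pos_INR. }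
    rewrite <- Ec at 1.
    replace (RtoC (INR n)) with ((w + RtoC (INR n)) + - w) at 1 by ring.
    rewrite <- (Cmod_opp w). apply Cmod_triangle. }
  assert (Hpos : (/ eps < Cmod (w + RtoC (INR n)))%R) by lra.
  assert (Hnz : w + RtoC (INR n) <> 0).
  { intros E. rewrite E, Cmod_0 in Hpos. lra. }
  change (Cmod (minus (Cinv (Cplus w (RtoC (INR n)))) (RtoC 0)) < eps)%R.
  replace (minus (Cinv (Cplus w (RtoC (INR n)))) (RtoC 0)) with (Cinv (Cplus w (RtoC (INR n)))).
  2:{ unfold minus, plus, opp; simpl. ring. }
  rewrite Cmod_inv; auto.
  replace (pos eps) with (/ / eps)%R by (field; apply Rgt_not_eq, cond_pos).
  apply Rinv_lt_contravar; auto. apply Rmult_lt_0_compat; lra.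
Qed.

Lemma csum_shift f N : csum f (S N) = f 0%nat + csum (fun n => f (S n)) N.
Proof. induction N; simpl in *. ring. rewrite IHN. ring. Qed.
Lemma csum_ext f g N : (forall n, f n = g n) -> csum f N = csum g N.
Proof. intros H; induction N; simpl; auto. rewrite IHN, H; auto. Qed.
Lemma csum_plus f g N : csum (fun n => f n + g n) N = csum f N + csum g N.
Proof. induction N; simpl. ring. rewrite IHN. ring. Qed.
Lemma csum_minus f g N : csum (fun n => f n - g n) N = csum f N - csum g N.
Proof. induction N; simpl. ring. rewrite IHN. ring. Qed.
Lemma csum_scal a f N : csum (fun n => a * f n) N = a * csum f N.
Proof. induction N; simpl. ring. rewrite IHN. ring. Qed.
Lemma csum_tele g N : csum (fun n => g n - g (S n)) N = g 0%nat - g N.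
Proof. induction N; simpl. ring. rewrite IHN. ring. Qed.

Lemma shift_pt z n : z - 1 + RtoC (INR (S n)) = z + RtoC (INR n).
Proof. rewrite S_INR. apply injective_projections; simpl; ring. Qed.

Lemma part_rev_0 rw k y : part_rev (rw ++ [k]) y 0 = 0.
Proof. destruct rw; reflexivity. Qed.

Lemma part_rev_shift z k : forall rw N,
  part_rev (rw ++ [k]) (z - 1) (S N) =
  part_rev (rw ++ [k]) z N + / (z - 1) ^ k * part_rev rw z N.
Proof.
  induction rw as [|j rw IH]; intros N.
  - cbn [app part_rev]. rewrite csum_shift.
    rewrite (csum_ext _ (fun n => 1 * / (z + RtoC (INR n)) ^ k)).
    2:{ intros n. rewrite shift_pt. reflexivity. }
    replace (z - 1 + RtoC (INR 0)) with (z - 1) by (apply injective_projections; simpl; ring).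
    ring.
  - cbn [app part_rev]. fold (app rw [k]).
    rewrite csum_shift, part_rev_0.
    rewrite (csum_ext _ (fun n => part_rev (rw ++ [k]) z n * / (z + RtoC (INR n)) ^ j
                + / (z - 1) ^ k * (part_rev rw z n * / (z + RtoC (INR n)) ^ j))).
    2:{ intros n. rewrite shift_pt, IH. ring. }
    rewrite csum_plus, csum_scal. ring.
Qed.

Section Main.
Variable Z : word -> C -> C.
Variable z : C.
Hypothesis HZ : hurwitz_polyzeta Z.
Hypothesis Hp : not_pole (z - 1).

Definition DD (w : word) : C := Z w (z - 1) - F2 Z z w.

Lemma Npz : not_pole z.
Proof. apply not_pole_pred; auto. Qed.

Lemma Z0 y : not_pole y -> Z [] y = 1.
Proof. destruct HZ as [H _]; auto. Qed.

Lemma DD_nil : DD [] = 0.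
Proof. unfold DD, F2. rewrite Z0, Z0; auto. ring. apply Npz. Qed.

Lemma Zlim w y : convergent_word w -> not_pole y ->
  filterlim (hurwitz_partial w y) eventually (locally (Z w y)).
Proof. destruct HZ as [_ [_ [H _]]]; auto. Qed.

Lemma DD_conv w : convergent_word w -> DD w = 0.
Proof.
  intros Cw. destruct w as [|k w'].
  { destruct Cw as [_ [u [k [E _]]]]. destruct u; discriminate. }
  assert (Hw' : filterlim (hurwitz_partial w' z) eventually (locally (Z w' z))).
  { destruct w' as [|b w'].
    - rewrite Z0 by apply Npz. apply (lim_ext (fun _ => 1)); [intros; reflexivity|].
      apply filterlim_const.
    - apply Zlim; [|apply Npz].
      destruct Cw as [V [u [k' [E Hk]]]]. split.
      + exact (Forall_inv_tail V).
      + destruct u as [|c u]; simpl in E; injection E; intros; subst.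
        * discriminate.
        * exists u, k'; auto. }
  assert (L1 := lim_shift _ _ (Zlim (k :: w') (z - 1) Cw Hp)).
  assert (L2 := lim_plus _ _ _ _ (Zlim (k :: w') z Cw Npz) (lim_scal _ (/ (z - 1) ^ k) _ Hw')).
  assert (E : forall N, hurwitz_partial (k :: w') (z - 1) (S N) =
     hurwitz_partial (k :: w') z N + / (z - 1) ^ k * hurwitz_partial w' z N).
  { intros N. unfold hurwitz_partial. simpl (rev (k :: w')). apply part_rev_shift. }
  assert (L3 := lim_ext _ _ _ E L1).
  assert (U := lim_unique _ _ _ L3 L2).
  unfold DD, F2. rewrite U. ring.
Qed.

Lemma DD_one : DD [1%nat] = 0.
Proof.
  destruct HZ as [_ [Hd _]].
  assert (L1 := Hd (z - 1) Hp). assert (L2 := Hd z Npz).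
  unfold is_digamma in L1, L2.
  set (g := fun n : nat => / (z - 1 + RtoC (INR n))).
  assert (E : forall N,
     RtoC (- euler_gamma) + csum (fun n => / RtoC (INR (S n)) - / (z + RtoC (INR n))) N
       + - g 0%nat + g N =
     RtoC (- euler_gamma) + csum (fun n => / RtoC (INR (S n)) - / (z - 1 + RtoC (INR n))) N).
  { intros N.
    assert (T := csum_tele g N).
    assert (C1 : csum (fun n => / RtoC (INR (S n)) - / (z - 1 + RtoC (INR n))) N =
       csum (fun n => / RtoC (INR (S n)) - / (z + RtoC (INR n))) N - csum (fun n => g n - g (S n)) N).
    { rewrite <- csum_minus. apply csum_ext. intros n. unfold g. rewrite shift_pt. ring. }
    rewrite C1, T. ring. }
  assert (L3 := lim_plus _ _ _ _ (lim_plus _ _ _ _ L2 (filterlim_const (- g 0%nat))) (lim_inv (z - 1))).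
  assert (L4 := lim_ext _ _ _ E L3).
  assert (U := lim_unique _ _ _ L4 L1).
  assert (G0 : g 0%nat = / (z - 1)).
  { unfold g. f_equal. apply injective_projections; simpl; ring. }
  unfold DD, F2. rewrite Z0 by apply Npz. rewrite Cpow_1_r.
  rewrite G0 in U.
  replace (Z [1%nat] (z - 1)) with (- (- Z [1%nat] z + - / (z - 1) + RtoC 0)) by (rewrite U; ring).
  apply injective_projections; simpl; ring.
Qed.

Lemma DD_HE v : valid_word v -> DD v = 0 -> ssum DD (stuffle [1%nat] v) = 0.
Proof.
  intros Vv Dv. unfold DD. rewrite ssum_minus.
  rewrite <- (F2_hom Z z HZ Hp); [| repeat constructor | auto].
  change (ssum (fun w => Z w (z - 1)) (stuffle [1%nat] v) - F2 Z z [1%nat] * F2 Z z v = 0).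
  rewrite <- (Zhom Z HZ); [| repeat constructor | auto | auto].
  assert (D1 := DD_one). unfold DD in D1, Dv.
  apply Ceq_minus in D1. apply Ceq_minus in Dv.
  rewrite D1, Dv. ring.
Qed.
End Main.

Lemma csum_one (f : nat -> C) m : f 0%nat = 0 ->
  (forall i, (2 <= i <= S m)%nat -> f i = 0) -> csum f (S (S m)) = f 1%nat.
Proof.
  intros H0 H. induction m.
  - simpl. rewrite H0. ring.
  - change (csum f (S (S (S m)))) with (csum f (S (S m)) + f (S (S m))).
    rewrite IHm by (intros; apply H; lia). rewrite (H (S (S m))) by lia. ring.
Qed.

Theorem theoremA (Z : word -> C -> C) :
  hurwitz_polyzeta Z ->
  forall z : C, not_pole (z - 1) ->
  forall w : word, valid_word w ->
    D_minus (Hser Z) z w = - ser_mul (Yser z) (Hser Z z) w.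
Proof.
  intros HZ z Hp w Vw.
  assert (D0 : DD Z z w = 0).
  { apply (uniq_main (DD Z z)); auto.
    - eapply DD_nil; eauto.
    - intros; eapply DD_conv; eauto.
    - intros; eapply DD_HE; eauto. }
  assert (Npz' : not_pole z) by (apply not_pole_pred; auto).
  unfold DD, F2 in D0. unfold D_minus, Hser, ser_mul.
  destruct w as [|k w'].
  - simpl. rewrite (Z0 Z HZ z Npz'), (Z0 Z HZ (z - 1) Hp). ring.
  - rewrite (csum_one _ (length w')).
    + simpl. pose proof (Forall_inv Vw) as Hk; simpl in Hk.
      destruct k as [|k]; [lia|]. simpl.
      apply Ceq_minus in D0. rewrite D0. change ((z - 1) * (z - 1) ^ k) with ((z - 1) ^ S k). ring.
    + simpl. ring.
    + intros i Hi. destruct i as [|[|i]]; [lia|lia|].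
      destruct w' as [|b w'']; simpl in Hi; [lia|].
      simpl. ring.
Qed.
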